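(* Let $X$ be an orthomodular lattice. The set $\mathrm{End}(X)=\mathbf{OMLatGal}(X,X)$, with composition in $\mathbf{OMLatGal}$ as multiplication, the identity as unit, the dagger $(s_*,s^* )^\dagger=(s^*,s_* )$ as involution, and $[s]=\ker(s)\circ\ker(s)^\dagger$, is a Foulis semigroup. Explicitly, for $s\in\mathrm{End}(X)$ and $x\in X$, $[s]_*(x)=[s]^*(x)=s^*(1)^\perp\vee(s^*(1)\wedge x^\perp)$, i.e. $[s]_*(x)=s^*(1)\supset x^\perp=(x\,\&\,s^*(1))^\perp$, where $a\supset b=a^\perp\vee(a\wedge b)$ and $a\,\&\,b=b\wedge(b^\perp\vee a)$.
   Context: An orthomodular lattice is a bounded lattice with an order-reversing involution $x\mapsto x^\perp$ such that $x\wedge x^\perp=0$, $x\vee x^\perp=1$, and $x\le y$ implies $y=x\vee(x^\perp\wedge y)$. $\mathbf{OMLatGal}$: objects orthomodular lattices; morphisms $f:X\to Y$ are pairs $(f_*,f^* )$ of order-reversing maps $f_*:X\to Y$, $f^*:Y\to X$ with $y\le f_*(x)\iff x\le f^*(y)$; identity has both components $x\mapsto x^\perp$; $(g\circ f)_*=g_*\circ\perp\circ f_*$, $(g\circ f)^*=f^*\circ\perp\circ g^*$; dagger $(f_*,f^* )^\dagger=(f^*,f_* )$. It is a dagger kernel category whose kernel of $f$ is the morphism $k:\downarrow k\to X$ with $k=f^*(1)$, where $\downarrow a=\{u\le a\}$ with complement $a\wedge u^\perp$ and $a_*(u)=u^\perp$, $a^*(x)=a\wedge x^\perp$. A Foulis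 semigroup is a monoid $(S,\cdot,1)$ with maps $(-)^\dagger:S\to S$ and $[-]:S\to S$ such that: (1) $1^\dagger=1$, $(s\cdot t)^\dagger=t^\dagger\cdot s^\dagger$, $s^{\dagger\dagger}=s$; (2) $[s]\cdot[s]=[s]=[s]^\dagger$; (3) $0:=[1]$ satisfies $0\cdot s=0=s\cdot 0$ for all $s$; (4) for all $s,x$: $s\cdot x=0$ iff $x=[s]\cdot y$ for some $y\in S$. *)

(* Defs.v *)
From HB Require Import structures.
From mathcomp Require Import all_boot all_order.
Set Implicit Arguments.
Unset Strict Implicit.
Unset Printing Implicit Defensive.
Import Order.TTheory.
Local Open Scope order_scope.

Definition galois {A B : Type} (leA : rel A) (leB : rel B)
  (lo : A -> B) (up : B -> A) : Prop :=
  [/\ (forall x x', leA x x' -> leB (lo x') (lo x)),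
      (forall y y', leB y y' -> leA (up y') (up y)) &
      (forall x y, leB y (lo x) = leA x (up y))].

(* Composition g o f in OMLatGal, where p is the orthocomplement of the
   middle object:  (g o f)_* = g_* o p o f_*,  (g o f)^* = f^* o p o g^*. *)
Definition comp_lo {A B C : Type} (p : B -> B) (gl : B -> C) (fl : A -> B) :=
  fun a => gl (p (fl a)).
Definition comp_up {A B C : Type} (p : B -> B) (fu : B -> A) (gu : C -> B) :=
  fun c => fu (p (gu c)).

Lemma galois_comp {A B C : Type} (leA : rel A) (leB : rel B) (leC : rel C)
  (p : B -> B) (pa : forall b b', leB b b' -> leB (p b') (p b))
  (pi : involutive p) fl fu gl gu :
  galois leA leB fl fu -> galois leB leC gl gu ->
  galois leA leC (comp_lo p gl fl) (comp_up p fu gu).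
Proof.
move=> [f1 f2 f3] [g1 g2 g3]; split; rewrite /comp_lo /comp_up.
- by move=> x x' h; apply: g1; apply: pa; apply: f1.
- by move=> y y' h; apply: f2; apply: pa; apply: g2.
- move=> x y; rewrite g3 -f3.
  by apply/idP/idP => /pa; rewrite pi.
Qed.

Lemma galois_dagger {A : Type} (leA : rel A) (lo up : A -> A) :
  galois leA leA lo up -> galois leA leA up lo.
Proof. by move=> [h1 h2 h3]; split => // x y; rewrite h3. Qed.

Section OML.
Context {d : Order.disp_t} (X : tbLatticeType d).

Definition is_oml (perp : X -> X) : Prop :=
  [/\ (forall x y, x <= y -> perp y <= perp x),
      (forall x, perp (perp x) = x),
      (forall x, x `&` perp x = \bot),
      (forall x, x `|` perp x = \top) &
      (forall x y, x <= y -> y = x `|` (perp x `&` y))].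

Definition sasaki_impl (perp : X -> X) (a b : X) : X := perp a `|` (a `&` b).
Definition andthen (perp : X -> X) (a b : X) : X := b `&` (perp b `|` a).

Record endo := Endo {
  elo : X -> X;
  eup : X -> X;
  egal : galois <=%O <=%O elo eup }.

Definition edag (s : endo) : endo := Endo (galois_dagger (egal s)).

Section WithPerp.
Variable perp : X -> X.
Hypothesis HX : is_oml perp.

Lemma perp_anti x y : x <= y -> perp y <= perp x.
Proof. by move=> hxy; case: HX => h _ _ _ _; exact: h hxy. Qed.
Lemma perpK : involutive perp.
Proof. by case: HX => _ h _ _ _. Qed.

Lemma perp_swap x y : (x <= perp y) = (y <= perp x).
Proof. by apply/idP/idP => /perp_anti; rewrite perpK. Qed.

Lemma galois_id : galois <=%O <=%O perp perp.
Proof. rewrite /galois; split; [exact: perp_anti|exact: perp_anti|move=> x y; exact: perp_swap]. Qed.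

Definition eid : endo := Endo galois_id.

Definition emul (s t : endo) : endo :=
  Endo (galois_comp perp_anti perpK (egal t) (egal s)).

(* ---- kernel of s : the morphism  ker s : (down k) -> X, k = s^*(1) ---- *)
Section Kernel.
Variable s : endo.
Definition kerel : X := eup s \top.
Definition downset := {u : X | u <= kerel}.
Definition le_down : rel downset := fun u v => val u <= val v.
Definition ker_lo (u : downset) : X := perp (val u).
Definition ker_up (x : X) : downset :=
  exist (fun u => u <= kerel) (kerel `&` perp x) (leIl _ _).
(* orthocomplement of down k : u |-> k /\ u^perp *)
Definition down_perp (u : downset) : downset := ker_up (val u).

Lemma perpI a b : perp (a `&` b) = perp a `|` perp b.
Proof.
apply: le_anti; apply/andP; split; last first.
  by rewrite leUx !perp_anti ?leIl ?leIr.
rewrite -[X in _ <= X]perpK; apply: perp_anti; rewrite lexI; apply/andP; split.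
  by rewrite -{2}(perpK a); apply: perp_anti; rewrite leUl.
by rewrite -{2}(perpK b); apply: perp_anti; rewrite leUr.
Qed.

Lemma perpU a b : perp (a `|` b) = perp a `&` perp b.
Proof. by rewrite -{1}(perpK a) -{1}(perpK b) -perpI perpK. Qed.

Lemma ker_up_anti x x' : x <= x' -> le_down (ker_up x') (ker_up x).
Proof.
move=> h; rewrite /le_down /= lexI leIl /=.
by apply: le_trans (leIr _ _) (perp_anti h).
Qed.

Lemma galois_ker : galois le_down <=%O ker_lo ker_up.
Proof.
split.
- by move=> u u' h; apply: perp_anti.
- by move=> y y'; apply: ker_up_anti.
- move=> [u hu] y; rewrite /le_down /ker_lo /= lexI hu /=.
  by rewrite perp_swap.
Qed.

Lemma down_perp_anti u u' : le_down u u' -> le_down (down_perp u') (down_perp u).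
Proof. exact: ker_up_anti. Qed.

Lemma down_perpK : involutive down_perp.
Proof.
move=> [u hu]; apply: val_inj => /=.
rewrite perpI perpK.
have : perp u = perp kerel `|` (perp (perp kerel) `&` perp u).
  by case: HX => _ _ _ _; apply; apply: perp_anti.
move/(congr1 perp); rewrite perpK perpU perpK perpI perpK; by move=> <-.

Qed.

Definition ker_dag_gal : galois <=%O le_down ker_up ker_lo :=
  let: And3 a b c := galois_ker in And3 b a (fun x y => esym (c y x)).

End Kernel.

(* [s] = ker(s) o ker(s)^dagger, composed through the object down k *)
Definition ebr (s : endo) : endo :=
  Endo (galois_comp (@down_perp_anti s) (@down_perpK s)
          (ker_dag_gal s) (galois_ker s)).

End WithPerp.
End OML.

Definition foulis_semigroup (S : Type) (mul : S -> S -> S) (one : S)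
  (dag : S -> S) (br : S -> S) : Prop :=
  [/\ associative mul /\ left_id one mul /\ right_id one mul,
      dag one = one /\ (forall s t, dag (mul s t) = mul (dag t) (dag s))
        /\ involutive dag,
      (forall s, mul (br s) (br s) = br s /\ br s = dag (br s)),
      (forall s, mul (br one) s = br one /\ mul s (br one) = br one) &
      (forall s x, mul s x = br one <-> exists y, x = mul (br s) y)].

(* Main.v *)
Require Import Defs.
From HB Require Import structures.
From mathcomp Require Import all_boot all_order.
From Stdlib Require Import ProofIrrelevance FunctionalExtensionality.
Import Order.TTheory.
Local Open Scope order_scope.

Section Aux.
Context {d : Order.disp_t} (X : tbLatticeType d) (perp : X -> X) (HX : is_oml perp).

Lemma endo_ext (s t : endo X) : (forall a, elo s a = elo t a) -> s = t.
Proof.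
case: s => ls us gs; case: t => lt ut gt /= h.
have el : ls = lt by apply: functional_extensionality.
subst lt.
have eu : us = ut.
  apply: functional_extensionality => c; apply: le_anti.
  case: gs => _ _ hs; case: gt => _ _ ht.
  apply/andP; split.
    by rewrite -ht hs.
  by rewrite -hs ht.
subst ut; congr Endo; apply: proof_irrelevance.
Qed.

Lemma oml_law a b : a <= b -> b = a `|` (perp a `&` b).
Proof. by case: HX => _ _ _ _; apply. Qed.

Lemma oml_dual a k : a <= k -> k `&` (perp k `|` a) = a.
Proof.
move=> h.
have := @oml_law _ _ (perp_anti HX h).
move/(congr1 perp); rewrite (perpK HX) (perpU HX) (perpK HX) (perpI HX) !(perpK HX).
by move=> <-.
Qed.

Lemma ebr_lo s x :
  elo (ebr HX s) x = perp (eup s \top) `|` (eup s \top `&` perp x).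
Proof.
rewrite /= /comp_lo /ker_lo /down_perp /ker_up /kerel /=.
by rewrite (perpI HX) (perpK HX).
Qed.

Lemma ebr_up s x :
  eup (ebr HX s) x = perp (eup s \top) `|` (eup s \top `&` perp x).
Proof.
rewrite /= /comp_up /ker_lo /down_perp /ker_up /kerel /=.
by rewrite (perpI HX) (perpK HX).
Qed.

Lemma up_bot (s : endo X) : eup s \bot = \top.
Proof.
apply: le_anti; rewrite lex1 /=.
case: (egal s) => _ _ h; by rewrite -h le0x.
Qed.

Lemma lo_bot (s : endo X) : elo s \bot = \top.
Proof.
apply: le_anti; rewrite lex1 /=.
case: (egal s) => _ _ h; by rewrite h le0x.
Qed.

Lemma zero_lo x : elo (ebr HX (eid HX)) x = \top.
Proof. by rewrite ebr_lo /= (perpK HX) join1x. Qed.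

Lemma perpT : perp \top = \bot.
Proof. by case: HX => _ _ h _ _; rewrite -(h \top) meet1x. Qed.

End Aux.

Theorem mainTheorem15 (d : Order.disp_t) (X : tbLatticeType d)
  (perp : X -> X) (HX : is_oml perp) :
  foulis_semigroup (emul HX) (eid HX) (@edag d X) (ebr HX) /\
  (forall (s : endo X) (x : X),
     [/\ elo (ebr HX s) x = perp (eup s \top) `|` (eup s \top `&` perp x),
         eup (ebr HX s) x = perp (eup s \top) `|` (eup s \top `&` perp x),
         elo (ebr HX s) x = sasaki_impl perp (eup s \top) (perp x) &
         elo (ebr HX s) x = perp (andthen perp x (eup s \top))]).
Proof.
have pK := perpK HX.
split; last first.
  move=> s x; split; rewrite ?ebr_lo ?ebr_up //.
  by rewrite /andthen (perpI HX) (perpU HX) !pK.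
split.
- split; [|split].
  + by move=> s t u; apply: endo_ext.
  + by move=> s; apply: endo_ext => a /=; rewrite /comp_lo /= pK.
  + by move=> s; apply: endo_ext => a /=; rewrite /comp_lo /= pK.
- split; [|split].
  + by apply: endo_ext.
  + by move=> s t; apply: endo_ext.
  + by move=> s; apply: endo_ext.
- move=> s; split; apply: endo_ext => a.
    change (elo (ebr HX s) (perp (elo (ebr HX s) a)) = elo (ebr HX s) a).
    rewrite !ebr_lo.
    rewrite pK.
    congr (_ `|` _); apply: (@oml_dual _ _ _ HX); exact: leIl.
  change (elo (ebr HX s) a = eup (ebr HX s) a).
  by rewrite ebr_lo ebr_up.
- move=> s; split; apply: endo_ext => a.
    change (elo (ebr HX (eid HX)) (perp (elo s a)) = elo (ebr HX (eid HX)) a).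
    by rewrite !zero_lo.
  change (elo s (perp (elo (ebr HX (eid HX)) a)) = elo (ebr HX (eid HX)) a).
  rewrite !zero_lo (@perpT _ _ _ HX).
  exact: lo_bot.
- move=> s x; split.
    move=> h.
    have hk : forall a, perp (eup s \top) <= elo x a.
      move=> a; have := congr1 (fun e => elo e a) h.
      change (elo s (perp (elo x a)) = elo (ebr HX (eid HX)) a -> perp (eup s \top) <= elo x a).
      rewrite zero_lo => e.
      case: (egal s) => _ _ g.
      have : \top <= elo s (perp (elo x a)) by rewrite e.
      by rewrite g => /(perp_anti HX); rewrite pK.
    exists x; apply: endo_ext => a.
    change (elo x a = elo (ebr HX s) (perp (elo x a))).
    rewrite ebr_lo pK.
    by rewrite -{2}(pK (eup s \top)) -(@oml_law _ _ _ HX _ _ (hk a)).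
  case=> y ->; apply: endo_ext => a.
  change (elo s (perp (elo (ebr HX s) (perp (elo y a)))) = elo (ebr HX (eid HX)) a).
  rewrite zero_lo ebr_lo.
  apply: le_anti; rewrite lex1.
  case: (egal s) => _ _ g; rewrite g (perpU HX) pK.
  exact: leIl.
Qed.
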